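(* Let $m\geq 2$ be a square-free integer with $m\equiv 2$ or $3 \pmod 4$, and let $K=\mathbb{Q}(\sqrt m)$. Then: if $m=2$, $U_K=\{1,\sqrt2=2\cos(2\pi/8)\}\subset\mathcal{F}_K=\{1,\sqrt2,1+\sqrt2\}$ and $1+\sqrt2=\min T_K$; if $m=3$, $U_K=\{1,\sqrt3=2\cos(2\pi/12)\}\subset\mathcal{F}_K=\{1,\sqrt3,1+\sqrt3\}$ and $1+\sqrt3=\min T_K$; if $m\geq 6$, $U_K=\{1\}\subset\mathcal{F}_K=\{1,\ \lfloor\sqrt m\rfloor-1+\sqrt m,\ 1+\min T_K\}$ and $\lfloor\sqrt m\rfloor-1+\sqrt m=\min T_K$.
   Context: For a real number field $K$, $\wp_K$ is the set of Pisot numbers $\theta\in K$ (real algebraic integers $>1$ whose other conjugates have modulus $<1$) with $\mathbb{Q}(\theta)=K$, enumerated $\theta_1<\theta_2<\cdots$; $\mathcal{F}_K:=\{\theta_{n+1}-\theta_n\mid n\in\mathbb{N}\}$. $U_K$ is the set of root of unity trace numbers in $K$, i.e. positive algebraic integers of the form $2\cos(2k\pi/n)$ with $n\geq4$, $1\leq k\leq n-1$, $\gcd(k,n)=1$, lying in $K$. $T_K$ is the set of algebraic integers $\beta\in K$ with $\beta>2$ whose conjugate $\beta'$ (image under the nontrivial embedding of $K$) lies in $(-2,2)$, $\beta'\neq 0$. *)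

(* Defs.v *)
From HB Require Import structures.
From mathcomp Require Import all_boot all_order all_algebra.
From mathcomp Require Import all_classical all_reals all_analysis.
Set Implicit Arguments. Unset Strict Implicit. Unset Printing Implicit Defensive.
Import Order.TTheory GRing.Theory Num.Theory.
Local Open Scope ring_scope.

Section QuadField.
Variables (R : realType) (m : nat).

Definition sqm : R := Num.sqrt (m%:R).

Definition inK (x : R) : Prop :=
  exists a b : rat, x = ratr a + ratr b * sqm.

Definition conjK (x y : R) : Prop :=
  exists a b : rat, x = ratr a + ratr b * sqm /\ y = ratr a - ratr b * sqm.

(* Q(x) = K : x lies in K and sqrt m lies in Q[x] = Q(x) *)
Definition generatesK (x : R) : Prop :=
  inK x /\ exists p : {poly rat}, sqm = (map_poly ratr p).[x].

Definition algInt (x : R) : Prop :=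
  exists p : {poly int}, p \is monic /\ root (map_poly (fun z : int => z%:~R) p) x.

Definition PisotK (t : R) : Prop :=
  1 < t /\ algInt t /\ generatesK t /\ exists t', conjK t t' /\ `|t'| < 1.

Definition FK (d : R) : Prop :=
  exists t1 t2, PisotK t1 /\ PisotK t2 /\ t1 < t2 /\
    (forall t, PisotK t -> ~ (t1 < t /\ t < t2)) /\ d = t2 - t1.

Definition UK (x : R) : Prop :=
  0 < x /\ algInt x /\ inK x /\
  exists n k : nat, (4 <= n)%N /\ (1 <= k)%N /\ (k <= n - 1)%N /\ coprime k n /\
    x = 2 * cos (2 * k%:R * pi / n%:R).

Definition TK (b : R) : Prop :=
  inK b /\ algInt b /\ 2 < b /\
  exists b', conjK b b' /\ -2 < b' /\ b' < 2 /\ b' != 0.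

End QuadField.

Definition squarefree (n : nat) : Prop :=
  forall p : nat, prime p -> ~~ (p * p %| n)%N.

Definition is_min (R : realType) (P : R -> Prop) (x : R) : Prop :=
  P x /\ forall y, P y -> x <= y.

(* Main.v *)
Require Import Defs.
From HB Require Import structures.
From mathcomp Require Import all_boot all_order all_algebra.
From mathcomp Require Import all_classical all_reals all_analysis.
From mathcomp Require Import zify ring lra.
Import Order.TTheory GRing.Theory Num.Theory.
Local Open Scope ring_scope.

Lemma squarefree1 : squarefree 1.
Proof. move=> p pp; apply/negP => /dvdn_leq => /(_ isT) h.
have := prime_gt1 pp; nia. Qed.

Lemma den1 (c : nat) (r : rat) (K : int) :
  squarefree c -> c%:R * r ^+ 2 = K%:~R -> denq r = 1.
Proof.
move=> sc h.
have eu : (numq r)%:~R = r * (denq r)%:~R :> rat by rewrite numqE.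
have e2 : (c%:Z * numq r ^+ 2 = K * denq r ^+ 2)%R.
  apply: (@intr_inj rat); rewrite !intrM eu -h -pmulrn; ring.
have e3 : (c * (`|numq r| * `|numq r|) = `|K| * (`|denq r| * `|denq r|))%N.
  by have := congr1 absz e2; rewrite !abszM.
have cop := coprime_num_den r.
have dv : (`|denq r| * `|denq r| %| c)%N.
  have : (`|denq r| * `|denq r| %| c * (`|numq r| * `|numq r|))%N by rewrite e3 dvdn_mull.
  rewrite Gauss_dvdl // coprimeMl !coprimeMr coprime_sym cop //.
have dpos := denq_gt0 r.
suff : `|denq r|%N = 1%N by lia.
case: (ltngtP `|denq r| 1) => // h1.
  by move: dpos; lia.
have pp := pdiv_prime h1.
have := sc _ pp; rewrite (dvdn_trans _ dv) //.
by rewrite dvdn_mul // pdiv_dvd.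
Qed.

Lemma quad_monic (T : nzRingType) (c1 c0 : T) :
  'X^2 + (c1%:P * 'X + c0%:P) \is monic.
Proof.
rewrite monicE lead_coefDl ?lead_coefXn // size_polyXn.
rewrite size_MXaddC; case: ifP => // _.
by have := size_polyC_leq1 c1; case: (size _) => [|[|]].
Qed.

Lemma quad_coef0 (T : nzRingType) (c1 c0 : T) :
  ('X^2 + (c1%:P * 'X + c0%:P))`_0 = c0.
Proof. by rewrite coefD coefXn coefD coefMX coefC /= !add0r coefC. Qed.

Lemma quad_coef1 (T : nzRingType) (c1 c0 : T) :
  ('X^2 + (c1%:P * 'X + c0%:P))`_1 = c1.
Proof. by rewrite coefD coefXn coefD coefMX coefC /= coefC add0r addr0. Qed.

Lemma parity (m : nat) (S U N : int) : (m %% 4 == 2)%N \/ (m %% 4 == 3)%N ->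
  S ^+ 2 - m%:Z * U ^+ 2 = 4 * N -> exists S' U' : int, S = 2 * S' /\ U = 2 * U'.
Proof.
move=> hmod h.
have eS := divz_eq S 2; have eU := divz_eq U 2; have em := divn_eq m 4.
set a := (S %/ 2)%Z in eS *; set e := (S %% 2)%Z in eS *.
set b := (U %/ 2)%Z in eU *; set f := (U %% 2)%Z in eU *.
set k := (m %/ 4)%N in em; set r := (m %% 4)%N in em hmod.
have he : e = 0 \/ e = 1.
  have := modz_ge0 S (isT : (2:int) != 0); have := ltz_pmod S (isT : (0:int) < 2).
  rewrite -/e; lia.
have hf : f = 0 \/ f = 1.
  have := modz_ge0 U (isT : (2:int) != 0); have := ltz_pmod U (isT : (0:int) < 2).
  rewrite -/f; lia.
have emz : m%:Z = 4 * k%:Z + r%:Z by rewrite {1}em; lia.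
have key : 4 * (N - (a^+2 + a*e - 4*k%:Z*b^+2 - 4*k%:Z*b*f - k%:Z*f^+2 - r%:Z*b^+2 - r%:Z*b*f)) = e^+2 - r%:Z * f^+2.
  rewrite mulrBr -h eS eU emz; ring.
have hr : r = 2%N \/ r = 3%N by case: hmod => /eqP ->; [left|right].
exists a, b.
case: he => he; case: hf => hf; rewrite he hf in key eS eU;
  case: hr => hr; rewrite hr in key; try lia.
Qed.

Section Main.
Variables (R : realType) (m : nat).
Hypotheses (hm2 : (2 <= m)%N) (hsf : squarefree m)
  (hmod : (m %% 4 == 2)%N \/ (m %% 4 == 3)%N).
Local Notation s := (sqm R m).

Lemma s_ge0 : 0 <= s.
Proof. exact: sqrtr_ge0. Qed.

Lemma s_sq : s * s = m%:R.
Proof. by rewrite -expr2 sqr_sqrtr // ler0n. Qed.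

Lemma s_gt1 : 1 < s.
Proof.
have h := s_sq; have h0 := s_ge0.
have : (2 : R) <= m%:R by rewrite (ler_nat R 2 m).
nra.
Qed.

Lemma s_gt0 : 0 < s.
Proof. by have := s_gt1; lra. Qed.

Lemma s_irr (r : rat) : ratr r != s.
Proof.
apply/eqP => e.
have er : 1%:R * r ^+ 2 = (m%:Z)%:~R :> rat.
  apply: (fmorph_inj (@ratr R)).
  by rewrite mul1r rmorphXn /= e expr2 s_sq ratr_int.
have d1 := @den1 1%N r _ squarefree1 er.
have ez : r = (numq r)%:~R by rewrite numqE d1 mulr1.
set z := numq r in ez.
have ezz : (z * z = m%:Z)%R.
  apply: (@intr_inj rat); rewrite intrM -ez -expr2 -(mul1r (r ^+ 2)) er //.
have en : (`|z| * `|z| = m)%N by have := congr1 absz ezz; rewrite abszM.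
have h1 : (1 < `|z|)%N by move: en hm2; set w := `|z|%N; nia.
have := hsf _ (pdiv_prime h1); rewrite -en dvdn_mul // pdiv_dvd //.
Qed.

Lemma uniq_rep (a b c d : rat) :
  ratr a + ratr b * s = ratr c + ratr d * s -> a = c /\ b = d.
Proof.
move=> h; case: (eqVneq b d) => [ebd|nbd].
  subst d; split => //; apply: (fmorph_inj (@ratr R)); exact: (addIr _ h).
exfalso; suff : ratr ((a - c) / (d - b)) = s by move/eqP; rewrite (negbTE (s_irr _)).
rewrite fmorph_div /= !rmorphB /=.
have nz : ratr d - ratr b != 0 :> R.
  by rewrite -rmorphB fmorph_eq0 subr_eq0 eq_sym.
apply: (mulIf nz); rewrite mulfVK //.
apply/eqP; rewrite -subr_eq0; apply/eqP; have h2 := h; move/eqP: h2; rewrite -subr_eq0 => /eqP h2. rewrite -h2; ring.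
Qed.

Definition v (a b : int) : R := a%:~R + b%:~R * s.

Lemma vE (a b : int) : v a b = ratr a%:~R + ratr b%:~R * s.
Proof. by rewrite !ratr_int. Qed.

Lemma uniq_int (a b c d : int) : v a b = v c d -> a = c /\ b = d.
Proof.
rewrite !vE => /uniq_rep [h1 h2]; split; exact: (intr_inj h1) || exact: (intr_inj h2).
Qed.

Lemma int_neq_s (a c : int) : c != 0 -> a%:~R != c%:~R * s :> R.
Proof.
move=> c0; apply/eqP => h.
have := @uniq_int a 0 0 c; rewrite /v /= mul0r addr0 add0r h.
case=> // _ e; by rewrite -e eqxx in c0.
Qed.

Lemma conj_int (a b : int) y : conjK m (v a b) y -> y = a%:~R - b%:~R * s.
Proof.
case=> a' [b' [h1 ->]].
move: h1; rewrite vE => /uniq_rep [<- <-]; by rewrite !ratr_int.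
Qed.

Lemma conj_intro (a b : int) : conjK m (v a b) (a%:~R - b%:~R * s).
Proof. by exists a%:~R, b%:~R; rewrite !ratr_int. Qed.

Lemma inK_int (a b : int) : inK m (v a b).
Proof. by exists a%:~R, b%:~R; rewrite !ratr_int. Qed.

Lemma algInt_int (a b : int) : algInt (v a b).
Proof.
exists ('X^2 + ((- (2 * a))%:P * 'X + (a * a - m%:Z * (b * b))%:P)); split.
  exact: quad_monic.
rewrite /root !(rmorphD, rmorphM) /= !map_polyX !map_polyC /= !(hornerD, hornerM, hornerX, hornerC).
rewrite /v !(intrD, intrB, intrM, intrN).
have -> : (m%:Z)%:~R = s * s :> R by rewrite s_sq.
apply/eqP; ring.
Qed.

Lemma intcoef (p : {poly int}) (q : {poly rat}) : p \is monic -> q \is monic ->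
  q %| map_poly intr p -> forall i, exists z : int, q`_i = z%:~R.
Proof.
move=> pm qm /dvdpP_rat_int [p1 [a a0 qE] [r pE]] i.
have l1 : lead_coef p1 * lead_coef r = 1 by rewrite -lead_coefM -pE; apply/monicP.
have ll : lead_coef p1 * lead_coef p1 = 1.
  move: l1; move: (lead_coef p1) (lead_coef r) => l lr h.
  have : (`|l| * `|lr| = 1)%N by rewrite -abszM h.
  move/eqP; rewrite muln_eq1 => /andP [/eqP h1 _].
  have : l = 1 \/ l = -1 by lia.
  by case=> ->.
have la : a * (lead_coef p1)%:~R = 1.
  have := monicP qm; rewrite qE lead_coefZ lead_coef_map_inj //; exact: intr_inj.
have ea : a = (lead_coef p1)%:~R.
  have : a * (lead_coef p1)%:~R * (lead_coef p1)%:~R = (lead_coef p1)%:~R by rewrite la mul1r.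
  by rewrite -mulrA -intrM ll mulr1.
exists (lead_coef p1 * p1`_i).
by rewrite qE coefZ coef_map_id0 // ea intrM.
Qed.

Lemma int_rep x : inK m x -> algInt x -> exists a b : int, x = v a b.
Proof.
case=> al [be ->] [p [pm pr]].
set P := map_poly (intr : int -> rat) p.
have eP : map_poly (intr : int -> R) p = map_poly ratr P.
  rewrite -map_poly_comp; apply: eq_map_poly => z /=; by rewrite ratr_int.
have Pm : P \is monic by apply: monic_map.
rewrite /root eP in pr.
case: (eqVneq be 0) => [be00 | be0].
  rewrite be00 rmorph0 mul0r addr0 in pr *.
  move: pr; rewrite horner_map fmorph_eq0 => /eqP r0.
  have : ('X - al%:P) %| P by rewrite dvdp_XsubCl /root r0.
  move/(@intcoef _ _ pm (monicXsubC _)) => /(_ 0%N) [z].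
  rewrite coefB coefX coefC /= sub0r => ez.
  exists (- z), 0; rewrite /v /= mul0r addr0 intrN -ratr_int -ez rmorphN opprK //.
set q : {poly rat} := 'X^2 + ((- (2 * al))%:P * 'X + (al ^+ 2 - m%:R * be ^+ 2)%:P).
have qm : q \is monic by exact: quad_monic.
have qx : (map_poly ratr q).[ratr al + ratr be * s] = 0 :> R.
  rewrite /q !(rmorphD, rmorphM) /= !map_polyX !map_polyC /= !(hornerD, hornerM, hornerX, hornerC).
  rewrite !(rmorphD, rmorphB, rmorphM, rmorphN) /= rmorph1 ratr_nat.
  rewrite -s_sq; ring.
have dq : q %| P.
  rewrite /dvdp; set r := P %% q.
  have sr : (size r <= 2)%N.
    by have := ltn_modp P q; rewrite monic_neq0 // /q -/r size_addl ?size_polyXn //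
     size_MXaddC; case: ifP => // _; have := size_polyC_leq1 (- (2 * al)); case: (size _) => [|[|]].
  have rx : (map_poly ratr r).[ratr al + ratr be * s] = 0 :> R.
    have := divp_eq P q; rewrite -/r => eP2.
    have : (map_poly ratr P).[ratr al + ratr be * s] = 0 :> R by apply/eqP.
    rewrite eP2 rmorphD rmorphM /= hornerD hornerM qx mulr0 add0r //.
  have sr' : (size (map_poly (ratr : rat -> R) r) <= 2)%N by rewrite size_map_poly.
  move: rx; rewrite (horner_coef_wide _ sr') !big_ord_recr big_ord0 /= add0r.
  rewrite !coef_map /= expr0 expr1 mulr1.
  set r0 := r`_0; set r1 := r`_1 => e.
  have : ratr (r0 + r1 * al) + ratr (r1 * be) * s = ratr 0 + ratr 0 * s :> R.
    rewrite !rmorph0 mul0r addr0 -e !(rmorphD, rmorphM) /=; ring.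
  move/uniq_rep => [e0 e1].
  have r10 : r1 = 0 by move/eqP: e1; rewrite mulf_eq0 (negbTE be0) orbF => /eqP.
  have r00 : r0 = 0 by move: e0; rewrite r10 mul0r addr0.
  apply/eqP/polyP => i; rewrite coef0.
  case: i => [|[|i]] //; by apply: nth_default; apply: (leq_trans sr).
have [z1 ez1] := @intcoef _ _ pm qm dq 1.
have [z0 ez0] := @intcoef _ _ pm qm dq 0.
rewrite /q quad_coef1 in ez1; rewrite /q quad_coef0 in ez0.
have eK : m%:R * (2 * be) ^+ 2 = (z1 ^+ 2 - 4 * z0)%:~R :> rat.
  rewrite intrB intrM expr2 intrM -ez1 -ez0; ring.
have d1 := @den1 _ _ _ hsf eK.
set u := numq (2 * be).
have eu : 2 * be = u%:~R by rewrite /u numqE d1 mulr1.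
have epar : z1 ^+ 2 - m%:Z * u ^+ 2 = 4 * z0.
  apply: (@intr_inj rat).
  rewrite !expr2 intrB !intrM -eu -ez1 -ez0.
  have -> : (m%:Z)%:~R = m%:R :> rat by [].
  ring.
have [S' [U' [eS eU]]] := @parity _ _ _ _ hmod epar.
exists (- S'), U'.
rewrite /v.
have -> : ratr al = (- S')%:~R :> R.
  rewrite -ratr_int; congr ratr; apply: (mulfI (_ : (2 : rat) != 0)) => //.
  have h := ez1; rewrite eS intrM in h.
  have e2 : (2:int)%:~R = 2 :> rat by [].
  by rewrite intrN mulrN -e2 -h opprK.
have -> : ratr be = U'%:~R :> R.
  rewrite -ratr_int; congr ratr; apply: (mulfI (_ : (2 : rat) != 0)) => //.
  have e2 : (2:int)%:~R = 2 :> rat by [].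
  by rewrite eu eU intrM e2.
done.
Qed.

Definition Pp (a b : int) : Prop :=
  0 < b /\ -1 < a%:~R - b%:~R * s /\ a%:~R - b%:~R * s < 1.

Lemma pisot_fwd t : PisotK m t -> exists a b, t = v a b /\ Pp a b.
Proof.
case=> t1 [ai [[ik [p ep]] [t' [cj nt]]]].
have [a [b eab]] := @int_rep t ik ai.
subst t; have et' := @conj_int _ _ _ cj; subst t'.
exists a, b; split => //.
move: nt; rewrite ltr_norml => /andP [n1 n2].
have bn0 : b != 0.
  apply/eqP => b0; move: ep; rewrite b0 /v mul0r addr0 -ratr_int horner_map => es.
  by move: (s_irr (p.[a%:~R])); rewrite es eqxx.
have sp := s_gt0.
have : 0 < b%:~R * s :> R by move: t1; rewrite /v; lra.
rewrite pmulr_lgt0 // ltr0z => bp.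
split => //; lra.
Qed.

Lemma pisot_bwd a b : Pp a b -> PisotK m (v a b).
Proof.
case=> bp [h1 h2].
have sp := s_gt1.
have b1 : 1 <= b%:~R :> R by rewrite (ler_int R 1 b).
split.
  have : s <= b%:~R * s by rewrite ler_peMl //; lra.
  rewrite /v; lra.
split; first exact: algInt_int.
split.
  split; first exact: inK_int.
  exists ((b%:~R)^-1 *: ('X - (a%:~R)%:P)).
  rewrite map_polyZ map_polyXsubC hornerZ hornerXsubC fmorphV /= !ratr_int /v.
  have bn : b%:~R != 0 :> R by rewrite intr_eq0 gt_eqF.
  by field.
exists (a%:~R - b%:~R * s); split; first exact: conj_intro.
by rewrite ltr_norml; apply/andP.
Qed.

Lemma Pp_bounds a b : Pp a b -> 2 * b%:~R * s - 1 < v a b /\ v a b < 2 * b%:~R * s + 1.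
Proof. case=> _ [h1 h2]; rewrite /v; split; lra. Qed.

Lemma L_lev a b a' b' : Pp a b -> Pp a' b' -> b < b' -> v a b < v a' b'.
Proof.
move=> P1 P2 lbb.
have [_ u1] := @Pp_bounds _ _ P1; have [l2 _] := @Pp_bounds _ _ P2.
have sp := s_gt1.
have hb0 : b + 1 <= b' by lia.
have : (b + 1)%:~R <= b'%:~R :> R by rewrite ler_int.
rewrite intrD.
move=> hb; nra.
Qed.

Lemma Pfloor (b : int) : 0 < b -> Pp (Num.floor (b%:~R * s)) b.
Proof.
move=> bp; have := floor_itv (b%:~R * s); rewrite intrD => /andP [h1 h2].
split => //; split; lra.
Qed.

Lemma Pceil (b : int) : 0 < b -> Pp (Num.floor (b%:~R * s) + 1) b.
Proof.
move=> bp; have := floor_itv (b%:~R * s); rewrite intrD => /andP [h1 h2].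
have hn := @int_neq_s (Num.floor (b%:~R * s)) b (lt0r_neq0 bp).
have h3 : (Num.floor (b%:~R * s))%:~R < b%:~R * s :> R by rewrite lt_neqAle hn h1.
split => //; rewrite intrD; split; lra.
Qed.

Local Notation G := (Num.floor s).

Lemma G_lt : G%:~R < s :> R /\ s < G%:~R + 1.
Proof.
have := floor_itv s; rewrite intrD => /andP [h1 h2].
have hn := @int_neq_s G 1 isT; rewrite mul1r in hn.
by split => //; rewrite lt_neqAle hn h1.
Qed.


Lemma FK_fwd d : FK m d -> d = 1 \/ d = G%:~R - 1 + s \/ d = G%:~R + s.
Proof.
case=> t1 [t2 [P1 [P2 [lt [nob ->]]]]].
have [a1 [b1 [e1 Q1]]] := @pisot_fwd _ P1.
have [a2 [b2 [e2 Q2]]] := @pisot_fwd _ P2.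
subst t1 t2.
have nb : forall a b, Pp a b -> ~ (v a1 b1 < v a b /\ v a b < v a2 b2).
  move=> a b Q; apply: nob; exact: pisot_bwd.
have sp := s_gt1. have [Gl Gu] := G_lt.
move: (Q1) (Q2) => [b1p [l1 u1]] [b2p [l2 u2]].
case: (ltgtP b1 b2) => hb.
- case: (ltgtP b2 (b1 + 1)) => hb2.
  + exfalso; clear -hb hb2; lia.
  + exfalso.
    have bp1 : 0 < b1 + 1 by clear -b1p; lia.
    have Qw := @Pfloor (b1 + 1) bp1.
    apply: (nb _ _ Qw); split; apply: L_lev => //; lia.
  + have eb : b2%:~R = b1%:~R + 1 :> R by rewrite hb2 intrD.
    rewrite eb mulrDl mul1r in l2 u2.
    have a1gt : b1%:~R * s < a1%:~R.
      rewrite ltNge le_eqVlt negb_or; apply/andP; split.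
        exact: (@int_neq_s a1 b1 (lt0r_neq0 b1p)).
      apply/negP => h.
      have Qw : Pp (a1 + 1) b1 by split => //; rewrite intrD; split; lra.
      apply: (nb _ _ Qw); split; first by rewrite /v intrD; lra.
      exact: (@L_lev _ _ _ _ Qw Q2 hb).
    have a2lt : a2%:~R < b1%:~R * s + s.
      rewrite ltNge le_eqVlt negb_or; apply/andP; split.
        have := (@int_neq_s a2 b2 (lt0r_neq0 b2p)); rewrite eb mulrDl mul1r eq_sym //.
      apply/negP => h.
      have Qw : Pp (a2 - 1) b2 by split => //; rewrite intrB eb mulrDl mul1r; split; lra.
      apply: (nb _ _ Qw); split; last by rewrite /v intrB; lra.
      exact: (@L_lev _ _ _ _ Q1 Qw hb).
    have kG : a2 - a1 <= G by rewrite floor_ge_int intrB; lra.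
    have kG2 : G - 2 < a2 - a1 by rewrite -(ltr_int R) !intrB; lra.
    have : a2 - a1 = G - 1 \/ a2 - a1 = G by clear -kG kG2; lia.
    case=> e; right; [left|right]; have := congr1 (intr : int -> R) e;
      rewrite !intrB /v eb => h; lra.
- exfalso; have := @L_lev _ _ _ _ Q2 Q1 hb; lra.
- left; subst b2.
  have h1 : a1 < a2 by rewrite -(ltr_int R); move: lt; rewrite /v; lra.
  have h2 : a2 < a1 + 2 by rewrite -(ltr_int R) intrD; lra.
  have -> : a2 = a1 + 1 by clear -h1 h2; lia.
  rewrite /v intrD; lra.
Qed.


Lemma flo (x : R) : (Num.floor x)%:~R <= x /\ x < (Num.floor x)%:~R + 1.
Proof. by have := floor_itv x; rewrite intrD1 => /andP [h1 h2]. Qed.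

Lemma FK_one : FK m (1 : R).
Proof.
have sp := s_gt1. have [Gl Gu] := G_lt.
have Q1 : Pp G 1 by split => //; rewrite mul1r; split; lra.
have Q2 : Pp (G + 1) 1 by split => //; rewrite mul1r intrD; split; lra.
exists (v G 1), (v (G + 1) 1); split; first exact: pisot_bwd.
split; first exact: pisot_bwd.
split; first by rewrite /v intrD; lra.
split; last by rewrite /v intrD; lra.
move=> t Pt [h1 h2]; have [a [b [et Q]]] := @pisot_fwd _ Pt; subst t.
move: (Q) => [bp _].
case: (ltgtP b 1) => hb.
- lia.
- by have := @L_lev _ _ _ _ Q2 Q hb; lra.
- subst b.
  have : G < a by rewrite -(ltr_int R); move: h1; rewrite /v; lra.
  have : a < G + 1 by rewrite -(ltr_int R) intrD; move: h2; rewrite /v intrD; lra.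
  lia.
Qed.

Local Notation f b := (Num.floor ((b : int)%:~R * s)).

Lemma FK_step (b : int) : 0 < b -> FK m ((f (b + 1) - f b)%:~R - 1 + s).
Proof.
move=> bp; have bp1 : 0 < b + 1 by lia.
have sp := s_gt1.
have Q1 := @Pceil b bp; have Q2 := @Pfloor (b + 1) bp1.
have hbb : b < b + 1 by lia.
exists (v (f b + 1) b), (v (f (b + 1)) (b + 1)); split; first exact: pisot_bwd.
split; first exact: pisot_bwd.
split; first exact: (@L_lev _ _ _ _ Q1 Q2 hbb).
split; last by rewrite /v !intrD !mulrDl; lra.
move=> t Pt [h1 h2]; have [a [c [et Q]]] := @pisot_fwd _ Pt; subst t.
have [fl fu] := flo (b%:~R * s).
have [gl gu] := flo ((b + 1)%:~R * s).
move: (Q) => [cp [ql qu]].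
case: (ltgtP c b) => hc.
- by have := @L_lev _ _ _ _ Q Q1 hc; lra.
- case: (ltgtP c (b + 1)) => hc2.
  + clear -hc hc2; lia.
  + by have := @L_lev _ _ _ _ Q2 Q hc2; lra.
  + subst c.
    have : a < f (b + 1) by rewrite -(ltr_int R); move: h2; rewrite /v; lra.
    move=> hlt; have : a + 1 <= f (b + 1) by clear -hlt; lia.
    rewrite -(ler_int R) intrD1 => hle; move: hle gl ql; move: ((Num.floor ((b + 1)%:~R * s))%:~R : R) ((b + 1)%:~R * s : R) => F X; lra.
- subst c.
  have : f b + 1 < a by rewrite -(ltr_int R) intrD; move: h1; rewrite /v intrD; lra.
  move=> hlt; have : f b + 2 <= a by clear -hlt; lia.
  rewrite -(ler_int R) intrD => hle; move: hle fu qu; move: ((f b)%:~R : R) (b%:~R * s : R) => F X; lra.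
Qed.

Lemma carry_diff (b : int) : f (b + 1) - f b = G \/ f (b + 1) - f b = G + 1.
Proof.
have [fl fu] := flo (b%:~R * s).
have [gl gu] := flo ((b + 1)%:~R * s).
have [Gl Gu] := G_lt.
set F1 := Num.floor ((b + 1)%:~R * s) in gl gu *.
set F0 := Num.floor (b%:~R * s) in fl fu *.
set g := Num.floor s in Gl Gu *.
have eb : (b + 1)%:~R * s = b%:~R * s + s by rewrite intrD1 mulrDl mul1r.
rewrite eb in gl gu.
have h1 : F1 < F0 + g + 1 + 1.
  rewrite -(ltr_int R) !intrD1 !intrD.
  move: gl fu Gu; move: (F1%:~R : R) (F0%:~R : R) (g%:~R : R) (b%:~R * s) => A B C X; lra.
have h2 : F0 + g - 1 < F1.
  rewrite -(ltr_int R) intrB !intrD.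
  move: gu fl Gl; move: (F1%:~R : R) (F0%:~R : R) (g%:~R : R) (b%:~R * s) => A B C X; lra.
lia.
Qed.

Lemma f1 : f 1 = G.
Proof. by rewrite mul1r. Qed.

Lemma ex_carry0 : exists b : int, 0 < b /\ f (b + 1) - f b = G.
Proof.
case: (pselect (exists b : int, 0 < b /\ f (b + 1) - f b = G)) => // H; exfalso.
have H1 : forall b : int, 0 < b -> f (b + 1) = f b + G + 1.
  move=> b bp; case: (carry_diff b) => e.
    by exfalso; apply: H; exists b.
  lia.
have ind : forall n : nat, f (n%:Z + 1) = G + n%:Z * (G + 1).
  elim => [|n IH]; first by rewrite add0r f1 mul0r addr0.
  rewrite intS H1; last by lia.
  rewrite [1 + n%:Z]addrC IH; ring.
have [Gl Gu] := G_lt.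
set e := G%:~R + 1 - s.
have ep : 0 < e by rewrite /e; lra.
pose n := Num.Def.archi_bound e^-1.
have hn : e^-1 < n%:R by apply: archi_boundP; rewrite invr_ge0 ltW.
have := floor_itv ((n%:Z + 1)%:~R * s); rewrite ind => /andP [hl _].
rewrite !intrD1 intrD intrM !intrD1 in hl.
have ee : e * e^-1 = 1 by rewrite mulfV // gt_eqF.
have hn' : e^-1 < (n%:Z)%:~R :> R by exact: hn.
move: hl ee hn' ep; rewrite /e; move: (e^-1) => ei.
move: ((n%:Z)%:~R : R) (G%:~R : R) => N g; nra.
Qed.

Lemma ex_carry1 : exists b : int, 0 < b /\ f (b + 1) - f b = G + 1.
Proof.
case: (pselect (exists b : int, 0 < b /\ f (b + 1) - f b = G + 1)) => // H; exfalso.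
have H1 : forall b : int, 0 < b -> f (b + 1) = f b + G.
  move=> b bp; case: (carry_diff b) => e.
    lia.
  by exfalso; apply: H; exists b.
have ind : forall n : nat, f (n%:Z + 1) = (n%:Z + 1) * G.
  elim => [|n IH]; first by rewrite add0r f1 mul1r.
  rewrite intS H1; last by lia.
  rewrite [1 + n%:Z]addrC IH; ring.
have [Gl Gu] := G_lt.
set e := s - G%:~R.
have ep : 0 < e by rewrite /e; lra.
pose n := Num.Def.archi_bound e^-1.
have hn : e^-1 < n%:R by apply: archi_boundP; rewrite invr_ge0 ltW.
have := floor_itv ((n%:Z + 1)%:~R * s); rewrite ind => /andP [_ hu].
rewrite !intrD1 intrM !intrD1 in hu.
have ee : e * e^-1 = 1 by rewrite mulfV // gt_eqF.
have hn' : e^-1 < (n%:Z)%:~R :> R by exact: hn.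
move: hu ee hn' ep; rewrite /e; move: (e^-1) => ei.
move: ((n%:Z)%:~R : R) (G%:~R : R) => N g; nra.
Qed.

Lemma FK_G0 : FK m (G%:~R - 1 + s).
Proof. by have [b [bp e]] := ex_carry0; have := @FK_step b bp; rewrite e. Qed.

Lemma FK_G1 : FK m (G%:~R + s).
Proof.
have [b [bp e]] := ex_carry1; have := @FK_step b bp; rewrite e intrD.
by rewrite addrK.
Qed.


Lemma cheb_rec (th : R) (j : nat) :
  2 * cos (j.+2%:R * th) = (2 * cos th) * (2 * cos (j.+1%:R * th)) - 2 * cos (j%:R * th).
Proof.
have e1 : j.+2%:R * th = j.+1%:R * th + th by rewrite -(natr1 j.+1) mulrDl mul1r.
have e2 : j%:R * th = j.+1%:R * th - th by rewrite -(natr1 j) mulrDl mul1r addrK.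
rewrite e1 e2 cosD cosB; ring.
Qed.

Lemma cos_nth (n k : nat) : (0 < n)%N -> cos (n%:R * (2 * k%:R * pi / n%:R)) = 1 :> R.
Proof.
move=> n0.
have -> : n%:R * (2 * k%:R * pi / n%:R) = 0 + (pi *+ 2) *+ k :> R.
  rewrite add0r -[(pi *+ 2) *+ k]mulr_natl -[pi *+ 2]mulr_natl; field; by rewrite pnatr_eq0 -lt0n.
by rewrite (periodicn (@cosD2pi R)) cos0.
Qed.

Lemma UK_conj (a b : int) (n k : nat) : (4 <= n)%N ->
  v a b = 2 * cos (2 * k%:R * pi / n%:R) -> `|a%:~R - b%:~R * s| <= 2.
Proof.
move=> n4 ex; set th := 2 * k%:R * pi / n%:R in ex.
rewrite leNgt; apply/negP => hx.
have inv : forall j : nat, exists A0 B0 A1 B1 : int,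
    2 * cos (j%:R * th) = v A0 B0 /\ 2 * cos (j.+1%:R * th) = v A1 B1 /\
    2 <= `|A0%:~R - B0%:~R * s| /\ `|A0%:~R - B0%:~R * s| < `|A1%:~R - B1%:~R * s|.
  elim=> [|j [A0 [B0 [A1 [B1 [e0 [e1 [h0 h1]]]]]]]].
    exists 2, 0, a, b; split; first by rewrite mul0r cos0 /v mul0r addr0 mulr1.
    split; first by rewrite mul1r ex.
    split => //; rewrite mul0r subr0 ger0_norm //.
  exists A1, B1, (a * A1 + b * B1 * m%:Z - A0), (a * B1 + b * A1 - B0).
  split => //.
  have ms : (m%:Z)%:~R = s * s :> R by rewrite s_sq.
  split.
    rewrite cheb_rec -ex e1 e0 /v !(intrD, intrB, intrM, intrN) ms; ring.
  have ey : (a * A1 + b * B1 * m%:Z - A0)%:~R - (a * B1 + b * A1 - B0)%:~R * s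
     = (a%:~R - b%:~R * s) * (A1%:~R - B1%:~R * s) - (A0%:~R - B0%:~R * s) :> R.
    rewrite !(intrD, intrB, intrM, intrN) ms; ring.
  rewrite ey; split; first by apply: (le_trans h0); apply: ltW.
  have := lerB_dist ((a%:~R - b%:~R * s) * (A1%:~R - B1%:~R * s)) (A0%:~R - B0%:~R * s).
  rewrite normrM.
  move: hx h0 h1; move: `|a%:~R - b%:~R * s| `|A0%:~R - B0%:~R * s| `|A1%:~R - B1%:~R * s|
    `|(a%:~R - b%:~R * s) * (A1%:~R - B1%:~R * s) - (A0%:~R - B0%:~R * s)| => X Y0 Y1 Z hX h0 h1 hZ.
  have Y1p : 0 < Y1 by lra.
  have : 2 * Y1 < X * Y1 by rewrite ltr_pM2r.
  lra.
have n0 : (0 < n)%N by apply: leq_trans n4.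
have [A0 [B0 [A1 [B1 [e0 [e1 [h0 h1]]]]]]] := inv n.-1.
rewrite prednK // /th cos_nth // mulr1 in e1.
have : v A1 B1 = v 2 0 by rewrite -e1 /v mul0r addr0.
case/uniq_int => eA eB.
move: h1 h0; rewrite eA eB mul0r subr0 (ger0_norm (_ : 0 <= (2%:~R : R))) //; lra.
Qed.


Lemma cos_lt1 (n k : nat) : (4 <= n)%N -> (1 <= k)%N -> (k <= n - 1)%N ->
  cos (2 * k%:R * pi / n%:R) < 1 :> R.
Proof.
move=> n4 k1 kn.
have pp := pi_gt0 R.
have np : 0 < n%:R :> R by rewrite ltr0n; apply: leq_trans n4.
have kp : 1 <= k%:R :> R by rewrite ler1n.
have kltn : k%:R < n%:R :> R by rewrite ltr_nat; move: kn n4; clear; lia.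
pose y : R := k%:R * pi / n%:R.
have -> : 2 * k%:R * pi / n%:R = y *+ 2 by rewrite /y mulr2n; ring.
rewrite cos_mulr2n cos2sin2.
have sy : 0 < sin y.
  apply: sin_gt0_pi; apply/andP; split.
    by rewrite /y divr_gt0 // mulr_gt0 //; lra.
  by rewrite /y ltr_pdivrMr // mulrC ltr_pM2l.
have : 0 < sin y ^+ 2 by rewrite exprn_gt0.
rewrite mulr2n; lra.
Qed.

Lemma UK_cases x : UK m x -> x = 1 \/ (x = s /\ (m <= 3)%N).
Proof.
case=> xp [ai [ik [n [k [n4 [k1 [kn [_ ex]]]]]]]].
have [a [b e]] := @int_rep x ik ai; rewrite e in xp ex *; clear e ai ik.
have hc := @UK_conj a b n k n4 ex.
have hl1 := @cos_lt1 n k n4 k1 kn.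
have hx2 : v a b < 2 by rewrite ex; lra.
move: hc; rewrite ler_norml => /andP [c1 c2].
have sp := s_gt1.
move: xp hx2; rewrite /v => xp hx2.
case: (ltgtP b 0) => hb.
- exfalso.
  have hb' : b%:~R <= -1 :> R.
    have : b <= -1 by clear -hb; lia.
    by rewrite -(ler_int R) intrN mulr1z.
  have : b%:~R * s <= - s by nra.
  lra.
- case: (eqVneq b 1) => [b1 | bn1].
  + subst b; rewrite mulr1z mul1r in xp hx2 c1 c2 *.
    have ha1 : -1 < a by rewrite -(ltr_int R) intrN mulr1z; lra.
    have ha2 : a < 1 by rewrite -(ltr_int R) mulr1z; lra.
    have a0 : a = 0 by clear -ha1 ha2; lia.
    subst a; rewrite mulr0z add0r in hx2 *.
    right; split => //.
    have : (m%:R : R) < 4%:R by rewrite -s_sq; have := s_ge0; nra.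
    by rewrite ltr_nat; clear; lia.
  + exfalso.
    have hb' : 2 <= b%:~R :> R.
      have : 2 <= b by clear -hb bn1; lia.
      by rewrite -(ler_int R).
    have : 2 * s <= b%:~R * s by rewrite ler_pM2r //; lra.
    lra.
- subst b; rewrite mul0r addr0 in xp hx2 *.
  have ha1 : 0 < a by rewrite -(ltr_int R).
  have ha2 : a < 2 by rewrite -(ltr_int R).
  have -> : a = 1 by clear -ha1 ha2; lia.
  by left.
Qed.

Lemma two_cos_pi3 : 2 * cos (pi / 3) = 1 :> R.
Proof.
set a := pi / 3.
have pp := pi_gt0 R.
have e : pi = a + a *+ 2 by rewrite /a mulr2n; field.
have E := cospi R; rewrite e cosD cos_mulr2n sin_mulr2n in E.
have cp : 0 < cos a by apply: cos_gt0_pihalf; rewrite /a; apply/andP; split; lra.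
set c := cos a in E cp *.
have E2 : c * (c ^+ 2 *+ 2 - 1) - (1 - c ^+ 2) * c *+ 2 = -1.
  by rewrite -sin2cos2 -[RHS]E; ring.
have : (c + 1) * (2 * c - 1) ^+ 2 = 0.
  transitivity ((c * (c ^+ 2 *+ 2 - 1) - (1 - c ^+ 2) * c *+ 2) + 1); first ring.
  by rewrite E2 addNr.
move/eqP; rewrite mulf_eq0 sqrf_eq0 => /orP [/eqP h | /eqP h]; lra.
Qed.

Lemma two_cos_pi4 : 2 * cos (pi / 4) = Num.sqrt 2 :> R.
Proof.
set a := pi / 4.
have pp := pi_gt0 R.
have e : a *+ 2 = pi / 2 by rewrite /a mulr2n; field.
have h : cos a ^+ 2 *+ 2 - 1 = 0 by rewrite -cos_mulr2n e cos_pihalf.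
have cp : 0 < cos a by apply: cos_gt0_pihalf; rewrite /a; apply/andP; split; lra.
have : (2 * cos a) ^+ 2 = 2.
  transitivity ((cos a ^+ 2 *+ 2 - 1) * 2 + 2); first ring.
  by rewrite h mul0r add0r.
move=> h2; rewrite -[X in Num.sqrt X]h2 sqrtr_sqr ger0_norm //; lra.
Qed.

Lemma two_cos_pi6 : 2 * cos (pi / 6) = Num.sqrt 3 :> R.
Proof.
set a := pi / 6.
have pp := pi_gt0 R.
have e : a *+ 2 = pi / 3 by rewrite /a mulr2n; field.
have h : cos a ^+ 2 *+ 2 - 1 = cos (pi / 3) by rewrite -cos_mulr2n e.
have h3 := two_cos_pi3.
have cp : 0 < cos a by apply: cos_gt0_pihalf; rewrite /a; apply/andP; split; lra.
have : (2 * cos a) ^+ 2 = 3.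
  transitivity ((cos a ^+ 2 *+ 2 - 1) * 2 + 2); first ring.
  rewrite h; lra.
move=> h2; rewrite -[X in Num.sqrt X]h2 sqrtr_sqr ger0_norm //; lra.
Qed.

Lemma UK_one : UK m (1 : R).
Proof.
have e1 : (1 : R) = v 1 0 by rewrite /v mul0r addr0.
split; first exact: ltr01.
split; first by rewrite e1; exact: algInt_int.
split; first by rewrite e1; exact: inK_int.
exists 6%N, 1%N; do 4 (split => //).
have -> : 2 * 1%:R * pi / 6%:R = pi / 3 :> R by field.
by rewrite two_cos_pi3.
Qed.

Lemma s_as_v : s = v 0 1.
Proof. by rewrite /v add0r mul1r. Qed.

Lemma UK_s2 : m = 2%N -> UK m s.
Proof.
move=> m2.
split; first exact: s_gt0.
split; first by rewrite s_as_v; exact: algInt_int.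
split; first by rewrite s_as_v; exact: inK_int.
exists 8%N, 1%N; do 4 (split => //).
have -> : 2 * 1%:R * pi / 8%:R = pi / 4 :> R by field.
by rewrite two_cos_pi4 /sqm m2.
Qed.

Lemma UK_s3 : m = 3%N -> UK m s.
Proof.
move=> m3.
split; first exact: s_gt0.
split; first by rewrite s_as_v; exact: algInt_int.
split; first by rewrite s_as_v; exact: inK_int.
exists 12%N, 1%N; do 4 (split => //).
have -> : 2 * 1%:R * pi / 12%:R = pi / 6 :> R by field.
by rewrite two_cos_pi6 /sqm m3.
Qed.


Lemma TK_fwd y : TK m y -> exists a c : int, y = v a c /\ 0 < c /\ 2 < y /\
  -2 < a%:~R - c%:~R * s /\ a%:~R - c%:~R * s < 2.
Proof.
case=> ik [ai [y2 [y' [cj [l1 [l2 _]]]]]].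
have [a [c e]] := @int_rep y ik ai; rewrite e in cj y2 *.
have ey := @conj_int _ _ _ cj; rewrite ey in l1 l2.
exists a, c; split => //; split => //.
have sp := s_gt0.
have : 0 < c%:~R * s by move: y2; rewrite /v; lra.
by rewrite pmulr_lgt0 // ltr0z.
Qed.

Lemma TK_lb y : TK m y -> G%:~R - 1 + s <= y /\ (y < G%:~R + s -> y = G%:~R - 1 + s).
Proof.
move/TK_fwd => [a [c [-> [cp [y2 [l1 l2]]]]]].
have sp := s_gt1. have [Gl Gu] := G_lt.
case: (eqVneq c 1) => [c1 | cn1].
- subst c; rewrite mulr1z mul1r in l1 l2 y2 *; rewrite /v mulr1z mul1r.
  have ha : G - 2 < a by rewrite -(ltr_int R) intrB; lra.
  split.
    have : (G - 1)%:~R <= a%:~R :> R by rewrite ler_int; clear -ha; lia.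
    rewrite intrB mulr1z; lra.
  move=> hlt; have hlt2 : a < G by rewrite -(ltr_int R); lra.
  have -> : a = G - 1 by clear -ha hlt2; lia.
  by rewrite intrB mulr1z.
- have hc : 2 <= c%:~R :> R.
    have : 2 <= c by clear -cp cn1; lia.
    by rewrite -(ler_int R).
  have : 2 * s <= c%:~R * s by rewrite ler_pM2r //; lra.
  move=> h2s; move: y2; rewrite /v => y2; rewrite /v.
  split; first lra.
  move=> h; exfalso; move: h2s y2 h l1 Gl sp; move: (c%:~R * s) (G%:~R : R) (a%:~R : R) => cs g aa; lra.
Qed.

Lemma TK_in (a : int) : 2 < v a 1 -> -2 < a%:~R - s -> a%:~R - s < 2 -> TK m (v a 1).
Proof.
move=> h1 h2 h3.
split; first exact: inK_int.
split; first exact: algInt_int.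
split => //.
exists (a%:~R - 1%:~R * s); split; first exact: conj_intro.
rewrite mulr1z mul1r; do 2 (split => //).
have := @int_neq_s a 1 isT; rewrite mulr1z mul1r.
by rewrite subr_eq0.
Qed.

Lemma part_small : (m <= 3)%N -> UK m s ->
   (forall x : R, UK m x <-> (x = 1 \/ x = s)) /\
   (forall x : R, UK m x -> FK m x) /\
   (forall d : R, FK m d <-> (d = 1 \/ d = s \/ d = 1 + s)) /\
   is_min (@TK R m) (1 + s).
Proof.
move=> m3 hus.
have sp := s_gt1.
have s2 : s < 2.
  have : (m%:R : R) <= 3%:R by rewrite ler_nat.
  rewrite -s_sq => h; have := s_ge0; nra.
have G1 : G = 1.
  apply: floor_def; apply/andP; split; first by rewrite mulr1z; lra.
  rewrite intrD mulr1z; lra.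
have G0 := FK_G0; have G1' := FK_G1.
rewrite G1 mulr1z in G0 G1'.
rewrite subrr add0r in G0.
split.
  move=> x; split; first by case/UK_cases => [-> | [-> _]]; [left | right].
  by case=> ->; [exact: UK_one | exact: hus].
split.
  by move=> x; case/UK_cases => [-> | [-> _]]; [exact: FK_one | exact: G0].
split.
  move=> d; split.
    case/FK_fwd => [-> | [-> | ->]]; rewrite ?G1 ?mulr1z; [left | right; left | right; right] => //.
    by rewrite subrr add0r.
  by case=> [-> | [-> | ->]]; [exact: FK_one | exact: G0 | exact: G1'].
split.
  have -> : 1 + s = v 1 1 by rewrite /v !mulr1z mul1r.
  apply: TK_in; rewrite /v ?mulr1z ?mul1r; lra.
move=> y ty; have [h1 h2] := @TK_lb y ty; have [_ [_ [y2 _]]] := ty.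
rewrite G1 mulr1z in h1 h2.
rewrite leNgt; apply/negP => hlt.
have := h2 hlt; rewrite subrr add0r => ey.
lra.
Qed.


Lemma part_big : (6 <= m)%N ->
   (forall x : R, UK m x <-> x = 1) /\
   (forall x : R, UK m x -> FK m x) /\
   (forall d : R, FK m d <-> (d = 1 \/ d = G%:~R - 1 + s \/ d = 1 + (G%:~R - 1 + s))) /\
   is_min (@TK R m) (G%:~R - 1 + s).
Proof.
move=> m6.
have s2 : 2 < s.
  have : (6%:R : R) <= m%:R by rewrite ler_nat.
  rewrite -s_sq => h; have := s_ge0; nra.
have G2 : 2 <= G by rewrite floor_ge_int; lra.
have [Gl Gu] := G_lt.
have G2r : 2 <= G%:~R :> R by rewrite (ler_int R 2 G).
split.
  move=> x; split; last by move=> ->; exact: UK_one.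
  case/UK_cases => [-> // | [_ m3]]; exfalso; move: m6 m3; clear; lia.
split.
  move=> x /UK_cases [-> | [_ m3]]; first exact: FK_one.
  exfalso; move: m6 m3; clear; lia.
split.
  move=> d; split.
    case/FK_fwd => [-> | [-> | ->]]; [left | right; left | right; right] => //.
    ring.
  case => [-> | [-> | ->]]; [exact: FK_one | exact: FK_G0 | ].
  rewrite (_ : 1 + (G%:~R - 1 + s) = G%:~R + s); last by ring.
  exact: FK_G1.
have et : G%:~R - 1 + s = v (G - 1) 1 by rewrite /v intrB mulr1z mul1r.
split.
  rewrite et; apply: TK_in; rewrite /v intrB !mulr1z ?mul1r;
  move: Gl Gu G2r s2; move: (G%:~R : R) => g; lra.
by move=> y ty; exact: (@TK_lb y ty).1.
Qed.

End Main.

Theorem proposition2p1 (R : realType) (m : nat)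
  (hm2 : (2 <= m)%N) (hsf : squarefree m)
  (hmod : (m %% 4 == 2)%N \/ (m %% 4 == 3)%N) :
  (m = 2%N ->
     (forall x : R, UK m x <-> (x = 1 \/ x = Num.sqrt 2)) /\
     Num.sqrt 2 = 2 * cos (2 * pi / 8) :> R /\
     (forall x : R, UK m x -> FK m x) /\
     (forall d : R, FK m d <-> (d = 1 \/ d = Num.sqrt 2 \/ d = 1 + Num.sqrt 2)) /\
     is_min (@TK R m) (1 + Num.sqrt 2)) /\
  (m = 3%N ->
     (forall x : R, UK m x <-> (x = 1 \/ x = Num.sqrt 3)) /\
     Num.sqrt 3 = 2 * cos (2 * pi / 12) :> R /\
     (forall x : R, UK m x -> FK m x) /\
     (forall d : R, FK m d <-> (d = 1 \/ d = Num.sqrt 3 \/ d = 1 + Num.sqrt 3)) /\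
     is_min (@TK R m) (1 + Num.sqrt 3)) /\
  ((6 <= m)%N ->
     let t : R := (Num.floor (Num.sqrt (m%:R : R)))%:~R - 1 + Num.sqrt m%:R in
     (forall x : R, UK m x <-> x = 1) /\
     (forall x : R, UK m x -> FK m x) /\
     (forall d : R, FK m d <-> (d = 1 \/ d = t \/ d = 1 + t)) /\
     is_min (@TK R m) t).
Proof.
split.
  move=> m2; subst m.
  have [h1 [h2 [h3 h4]]] := @part_small R 2 hm2 hsf hmod isT (@UK_s2 R 2 hm2 erefl).
  rewrite /sqm in h1 h2 h3 h4.
  split => //; split; last by [].
  have -> : 2 * pi / 8 = pi / 4 :> R by field.
  by rewrite two_cos_pi4.
split.
  move=> m3; subst m.
  have [h1 [h2 [h3 h4]]] := @part_small R 3 hm2 hsf hmod isT (@UK_s3 R 3 hm2 erefl).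
  rewrite /sqm in h1 h2 h3 h4.
  split => //; split; last by [].
  have -> : 2 * pi / 12 = pi / 6 :> R by field.
  by rewrite two_cos_pi6.
move=> m6.
exact: (@part_big R m hm2 hsf hmod m6).
Qed.
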